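(* Fix $\gamma\in(0,1]$ and $0<\alpha<0.25$, let $\xi>0$ be arbitrarily small, and set $\tilde k=(\alpha+\xi)\log_2N$. Then for all sufficiently large $N$ and every integer $k$ with $\tilde k\le k\le b$, $$\lambda(s^*_k+1)\le\lambda(\lambda^{2^k-1}+1)\le\sqrt\lambda.$$
   Context: Let $N\ge1$, $\lambda=1-\gamma/N^\alpha$, and $b=b(N)\ge1$ an integer with $b=O(\log N)$. The mean-field vector field is $f_k(s)=\lambda(s_{k-1}^2-s_k^2)-(s_k-s_{k+1})$, $k=1,\dots,b$, with $s_0=1,s_{b+1}=0$, and $s^*$ is its unique equilibrium in $\{s\in\mathbb R^b:1\ge s_1\ge\cdots\ge s_b\ge0\}$, i.e. $s^*_0=1$, $\lambda((s^*_{k-1})^2-(s^*_k)^2)-(s^*_k-s^*_{k+1})=0$ for $1\le k\le b-1$ and $\lambda((s^*_{b-1})^2-(s^*_b)^2)-s^*_b=0$. *)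

(* Defs.v *)
From Stdlib Require Import Reals Lra Lia.
Open Scope R_scope.

Definition lam (gamma alpha : R) (N : nat) : R :=
  1 - gamma / Rpower (INR N) alpha.

(* Mean-field vector field, component k (1 <= k <= b), for a sequence s
   indexed by nat, with the boundary conventions s_0 = 1 and s_{b+1} = 0
   imposed separately in [is_equilibrium]. *)
Definition meanfield (l : R) (s : nat -> R) (k : nat) : R :=
  l * (s (k - 1)%nat ^ 2 - s k ^ 2) - (s k - s (S k)).

Definition is_equilibrium (l : R) (b : nat) (s : nat -> R) : Prop :=
  s 0%nat = 1 /\ s (S b) = 0 /\
  (forall k : nat, (k < b)%nat -> s (S k) <= s k) /\
  0 <= s b /\
  (forall k : nat, (1 <= k <= b)%nat -> meanfield l s k = 0).

Definition log2 (x : R) : R := ln x / ln 2.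

(* Main.v *)
Require Import Defs.
From Stdlib Require Import Reals Lra Lia.
Open Scope R_scope.

Lemma eq_nonneg (l : R) (b : nat) (s : nat -> R) :
  is_equilibrium l b s -> forall j, (j <= b)%nat -> 0 <= s (b - j)%nat.
Proof.
  intros [H0 [Hb1 [Hmon [Hsb Hmf]]]] j. induction j as [|j IH]; intros Hj.
  - replace (b - 0)%nat with b by lia. exact Hsb.
  - assert (E : (b - j = S (b - S j))%nat) by lia.
    specialize (IH ltac:(lia)). rewrite E in IH.
    specialize (Hmon (b - S j)%nat ltac:(lia)). lra.
Qed.

Lemma eq_tele (l : R) (b : nat) (s : nat -> R) :
  is_equilibrium l b s -> forall i, (i < b)%nat ->
  s (b - i)%nat = l * (s (b - i - 1)%nat ^ 2 - s b ^ 2).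
Proof.
  intros Heq. destruct Heq as [H0 [Hb1 [Hmon [Hsb Hmf]]]].
  induction i as [|i IH]; intros Hi.
  - specialize (Hmf b ltac:(lia)). unfold meanfield in Hmf.
    replace (b - 0)%nat with b by lia. rewrite Hb1 in Hmf. nra.
  - specialize (IH ltac:(lia)).
    specialize (Hmf (b - S i)%nat ltac:(lia)). unfold meanfield in Hmf.
    replace (S (b - S i)) with (b - i)%nat in Hmf by lia.
    replace (b - i - 1)%nat with (b - S i)%nat in IH by lia.
    rewrite IH in Hmf. replace (b - S i - 1)%nat with (b - S i - 1)%nat by lia.
    nra.
Qed.

Lemma part1 (l : R) (b : nat) (s : nat -> R) :
  0 <= l -> is_equilibrium l b s -> forall k, (k <= b)%nat -> s k <= l ^ (2 ^ k - 1).
Proof.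
  intros Hl Heq. pose proof (eq_nonneg _ _ _ Heq) as Hnn.
  pose proof (eq_tele _ _ _ Heq) as Ht.
  destruct Heq as [H0 [Hb1 [Hmon [Hsb Hmf]]]].
  induction k as [|k IH]; intros Hk.
  - rewrite H0. simpl. lra.
  - specialize (IH ltac:(lia)).
    assert (Hsk : 0 <= s k).
    { specialize (Hnn (b - k)%nat ltac:(lia)). replace (b - (b - k))%nat with k in Hnn by lia. exact Hnn. }
    assert (Hsb2 : 0 <= s b).
    { exact Hsb. }
    specialize (Ht (b - S k)%nat ltac:(lia)).
    replace (b - (b - S k))%nat with (S k) in Ht by lia.
    replace (S k - 1)%nat with k in Ht by lia.
    assert (Hp : (1 <= 2 ^ k)%nat).
    { pose proof (Nat.pow_le_mono_r 2 0 k ltac:(lia) ltac:(lia)) as HH. simpl in HH. lia. }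
    assert (E : (2 ^ S k - 1 = 1 + (2 ^ k - 1) * 2)%nat) by (rewrite Nat.pow_succ_r'; lia).
    rewrite E, pow_add, pow_mult, pow_1.
    assert (Hsq : s k ^ 2 <= (l ^ (2 ^ k - 1)) ^ 2).
    { apply pow_incr. lra. }
    rewrite Ht. assert (0 <= s b ^ 2) by nra.
    apply Rmult_le_compat_l with (r := l) in Hsq; [|lra]. nra.
Qed.

Lemma part2 (l x : R) : 0 < l <= 1 -> 0 <= x -> x <= (1 - l) / 2 ->
  l * (x + 1) <= sqrt l.
Proof.
  intros Hl Hx Hxd. pose proof (sqrt_sqrt l ltac:(lra)) as Hs.
  set (t := sqrt l) in *.
  assert (Ht0 : 0 <= t) by apply sqrt_pos.
  assert (Ht1 : t <= 1) by nra.
  rewrite <- Hs in *.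
  assert (h1 : t * t * x <= t * x) by (apply Rmult_le_compat_r; nra).
  assert (h2 : t * x <= t * ((1 - t * t) / 2)) by (apply Rmult_le_compat_l; lra).
  assert (h3 : 0 <= t * ((1 - t) * (1 - t))) by (apply Rmult_le_pos; nra).
  nra.
Qed.

Lemma exp_quad (x : R) : 0 <= x -> x * x / 4 <= exp x.
Proof.
  intros Hx. replace x with (x/2 + x/2) at 3 by field.
  rewrite exp_plus. pose proof (exp_ineq1_le (x/2)). nra.
Qed.

Theorem lemma16 (gamma alpha xi : R) (b : nat -> nat) :
  0 < gamma <= 1 ->
  0 < alpha < 1/4 ->
  0 < xi ->
  (forall N : nat, (1 <= N)%nat -> (1 <= b N)%nat) ->
  (exists C : R, exists N1 : nat, forall N : nat, (N1 <= N)%nat ->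
      INR (b N) <= C * ln (INR N)) ->
  exists N0 : nat, forall N : nat, (N0 <= N)%nat ->
    forall s : nat -> R, is_equilibrium (lam gamma alpha N) (b N) s ->
    forall k : nat,
      (alpha + xi) * log2 (INR N) <= INR k -> (k <= b N)%nat ->
      lam gamma alpha N * (s k + 1)
        <= lam gamma alpha N * (lam gamma alpha N ^ (2 ^ k - 1) + 1)
      /\ lam gamma alpha N * (lam gamma alpha N ^ (2 ^ k - 1) + 1)
        <= sqrt (lam gamma alpha N).
Proof.
  intros Hg Ha Hxi _ _.
  set (A := gamma * (xi * xi) / 4).
  set (Cc := gamma - ln (gamma / 2)).
  assert (HA : 0 < A) by (unfold A; assert (0 < xi * xi) by nra; assert (0 < gamma * (xi * xi)) by nra; lra).
  assert (Hlg : ln (gamma / 2) < 0).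
  { rewrite <- ln_1. apply ln_increasing; lra. }
  assert (HCc : 0 < Cc) by (unfold Cc; lra).
  set (L0 := (alpha + Cc) / A + 1).
  assert (HL0 : A * L0 = alpha + Cc + A) by (unfold L0; field; lra).
  assert (HL01 : 1 <= L0).
  { unfold L0. assert (0 < (alpha + Cc) / A) by (apply Rdiv_lt_0_compat; lra). lra. }
  destruct (INR_unbounded (exp L0)) as [n Hn].
  exists (n + 2)%nat. intros N HN s Heq k Hk Hkb.
  assert (HNn : INR n <= INR N) by (apply le_INR; lia).
  assert (HN2 : 2 <= INR N) by (replace 2 with (INR 2) by (simpl; lra); apply le_INR; lia).
  assert (HNpos : 0 < INR N) by lra.
  set (L := ln (INR N)) in *.
  assert (HL : L0 < L).
  { unfold L. rewrite <- (ln_exp L0). apply ln_increasing; [apply exp_pos|lra]. }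
  set (P := Rpower (INR N) alpha).
  assert (HP : P = exp (alpha * L)) by reflexivity.
  assert (HP1 : 1 < P).
  { rewrite HP. pose proof (exp_ineq1 (alpha * L) ltac:(nra)). nra. }
  set (d := gamma / P).
  assert (Hd0 : 0 < d) by (unfold d; apply Rdiv_lt_0_compat; lra).
  assert (Hdg : d <= gamma).
  { unfold d. apply Rmult_le_reg_r with P; [lra|]. field_simplify; nra. }
  assert (Hlam : lam gamma alpha N = 1 - d) by reflexivity.
  rewrite Hlam in *.
  split.
  - assert (Hs := part1 (1 - d) (b N) s ltac:(lra) Heq k Hkb). apply Rmult_le_compat_l; lra.
  - assert (Hd1 : d < 1) by (unfold d; apply Rmult_lt_reg_r with P; [lra|]; field_simplify; lra).
    apply part2; [lra| apply pow_le; lra |].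
    set (m := (2 ^ k - 1)%nat).
    assert (Hln2 : 0 < ln 2) by (pose proof ln_lt_2; lra).
    assert (Hk2 : (alpha + xi) * L <= INR k * ln 2).
    { unfold log2 in Hk. fold L in Hk.
      apply Rmult_le_compat_r with (r := ln 2) in Hk; [|lra].
      replace ((alpha + xi) * (L / ln 2) * ln 2) with ((alpha + xi) * L) in Hk by (field; lra).
      exact Hk. }
    assert (H2k : INR (2 ^ k) = exp (INR k * ln 2)).
    { rewrite pow_INR. replace (INR 2) with 2 by (simpl; lra). rewrite <- (Rpower_pow k 2) by lra. reflexivity. }
    assert (Hpk1 : (1 <= 2 ^ k)%nat).
    { pose proof (Nat.pow_le_mono_r 2 0 k ltac:(lia) ltac:(lia)) as HH. simpl in HH. lia. }
    assert (Hm : INR m = INR (2 ^ k) - 1).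
    { unfold m. rewrite minus_INR by lia. simpl. lra. }
    set (E := exp (xi * L)).
    assert (HE : A * (L * L) <= gamma * E).
    { unfold A, E. pose proof (exp_quad (xi * L) ltac:(nra)). nra. }
    assert (H2kPE : P * E <= INR (2 ^ k)).
    { rewrite H2k, HP. unfold E. rewrite <- exp_plus.
      destruct (Rle_lt_or_eq_dec _ _ Hk2) as [Hlt|Heq2].
      - left. apply exp_increasing. lra.
      - right. f_equal; lra. }
    assert (Hx1 : (1 - d) ^ m <= exp (- d * INR m)).
    { rewrite <- (exp_ln ((1-d)^m)) by (apply pow_lt; lra).
      rewrite ln_pow by lra.
      assert (ln (1 - d) <= - d).
      { pose proof (exp_ineq1_le (-d)). rewrite <- (ln_exp (-d)).
        destruct (Rle_lt_or_eq_dec _ _ H) as [h|h].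
        - left. apply ln_increasing; lra.
        - right. rewrite <- h. f_equal; lra. }
      assert (0 <= INR m) by apply pos_INR.
      destruct (Rle_lt_or_eq_dec _ _ (Rmult_le_compat_l (INR m) _ _ H0 H)) as [h|h].
      - left. apply exp_increasing. lra.
      - right. f_equal; lra. }
    assert (Hdm : gamma * E - gamma <= d * INR m).
    { rewrite Hm.
      assert (d * (P * E) = gamma * E) by (unfold d; field; lra).
      assert (d * (P * E) <= d * INR (2^k)).
      { apply Rmult_le_compat_l; [lra|exact H2kPE]. }
      nra. }
    assert (Hquad : alpha * L + Cc <= A * (L * L)).
    { assert (A * L0 * L <= A * L * L) by (apply Rmult_le_compat_r; nra). nra. }
    assert (Htarget : exp (- d * INR m) <= d / 2).
    { replace (d / 2) with (exp (ln (gamma / 2) - alpha * L)).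
      - destruct (Rle_lt_or_eq_dec (- d * INR m) (ln (gamma / 2) - alpha * L)) as [h|h].
        + unfold Cc in Hquad. lra.
        + left. apply exp_increasing. exact h.
        + right. f_equal. exact h.
      - unfold Rminus. rewrite exp_plus, exp_ln by lra.
        rewrite exp_Ropp, <- HP. unfold d. field. lra. }
    lra.
Qed.
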